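(* Let $w\in\{a,b\}^*$ (with $a\ne b$) satisfy $l(w)=8$. Then every element of $\mathtt{BR}(w)$ is rich if and only if $w\in\{abababab,\ babababa\}$.
   Context: For a word $w=w_1\cdots w_n$, $|w|=n$, $w^R=w_n\cdots w_1$; $w$ is a palindrome if $w=w^R$; a factor of $w$ is a word $u$ with $w=puq$. A word $w$ is rich if the number of distinct nonempty palindromic factors of $w$ equals $|w|$. The block reversal of a nonempty word $w$ is $\mathtt{BR}(w)=\{B_t\cdots B_1 : w=B_1\cdots B_t,\ t\ge1,\ \text{each } B_i \text{ nonempty}\}$. Every nonempty word has a unique run-length encoding $w=c_1^{n_1}\cdots c_k^{n_k}$ with letters $c_i\neq c_{i+1}$, $n_i\ge1$; $l(w)=k$. *)

(* Defs.v *)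
From mathcomp Require Import all_boot.
Set Implicit Arguments. Unset Strict Implicit. Unset Printing Implicit Defensive.

Section Words.
Variable T : eqType.

Definition palindrome (w : seq T) : bool := rev w == w.

Definition factors (w : seq T) : seq (seq T) :=
  undup [seq drop i (take j w) | i <- iota 0 (size w).+1, j <- iota 0 (size w).+1].

Definition pal_factors (w : seq T) : seq (seq T) :=
  [seq u <- factors w | (u != [::]) && palindrome u].

Definition rich (w : seq T) : Prop := size (pal_factors w) = size w.

Definition in_BR (w v : seq T) : Prop :=
  exists bs : seq (seq T),
    [/\ bs != [::], all (fun B => B != [::]) bs, flatten bs = w & v = flatten (rev bs)].

Fixpoint rle (w : seq T) : seq (T * nat) :=
  match w with
  | [::] => [::]
  | x :: w' =>
      match rle w' with
      | (c, n) :: r => if c == x then (c, n.+1) :: r else (x, 1) :: (c, n) :: r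
      | [::] => [:: (x, 1)]
      end
  end.

Definition runs (w : seq T) : nat := size (rle w).

End Words.

Example rle_ex : runs [:: 1; 1; 2; 1; 3; 3]%N = 4. Proof. by []. Qed.
Example rich_ex : rich [:: 0; 1; 0; 0]%N. Proof. by []. Qed.
Example nrich_ex : ~ rich [:: 0; 0; 1; 1; 0; 1; 0; 0]%N. Proof. by []. Qed.

(* Main.v *)
Require Import Defs.
From mathcomp Require Import all_boot.
Set Implicit Arguments. Unset Strict Implicit. Unset Printing Implicit Defensive.

Section Infra.
Variable T : eqType.
Implicit Types u w p s z : seq T.

Lemma factorsP u w : reflect (exists p s, w = p ++ u ++ s) (u \in factors w).
Proof.
apply: (iffP idP).
  rewrite /factors mem_undup => /allpairsP [[i j] /= [_ _ ->]].
  exists (take i (take j w)), (drop j w).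
  by rewrite catA cat_take_drop cat_take_drop.
move=> [p [s ->]]; rewrite /factors mem_undup.
apply/allpairsP; exists (size p, size p + size u); split.
- by rewrite mem_iota /= !size_cat add0n ltnS leq_addr.
- by rewrite mem_iota /= !size_cat add0n ltnS addnA leq_addr.
- by rewrite catA take_size_cat ?size_cat // drop_size_cat.
Qed.

Lemma pal_factorsP u w :
  reflect ([/\ u != [::], palindrome u & exists p s, w = p ++ u ++ s]) (u \in pal_factors w).
Proof.
rewrite /pal_factors mem_filter; apply: (iffP andP).
  by move=> [/andP [h1 h2] /factorsP h3].
by move=> [h1 h2 h3]; split; [rewrite h1 h2 | apply/factorsP].
Qed.

Lemma pal_factors_uniq w : uniq (pal_factors w).
Proof. exact/filter_uniq/undup_uniq. Qed.


Lemma new_suffix u x z : z \in pal_factors (rcons u x) -> z \notin pal_factors u ->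
  [/\ z != [::], palindrome z, exists p, rcons u x = p ++ z &
      forall p s, u <> p ++ z ++ s].
Proof.
move=> /pal_factorsP [nz pz [p [s E]]] nin.
have nf : forall p s, u <> p ++ z ++ s.
  by move=> p' s' E'; move/negP: nin; apply; apply/pal_factorsP; split => //; exists p', s'.
split => //.
case: (lastP s) E => [|s' y]; first by rewrite cats0 => E; exists p.
rewrite -!rcons_cat => /rcons_inj [E _]; exfalso; exact: (nf p s').
Qed.

Lemma new_unique u x z1 z2 :
  z1 \in pal_factors (rcons u x) -> z1 \notin pal_factors u ->
  z2 \in pal_factors (rcons u x) -> z2 \notin pal_factors u -> z1 = z2.
Proof.
wlog le12 : z1 z2 / size z1 <= size z2.
  move=> H h1 h2 h3 h4; case: (leqP (size z1) (size z2)) => [le|le].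
    exact: H.
  by apply/esym/H => //; apply: ltnW.
move=> h1 h2 h3 h4; case: (new_suffix h1 h2) => _ p1 [q1 E1] nf1; case: (new_suffix h3 h4) => _ p2 [q2 E2] nf2.
have R1 : rev (rcons u x) = z1 ++ rev q1 by rewrite E1 rev_cat (eqP p1).
have R2 : rev (rcons u x) = z2 ++ rev q2 by rewrite E2 rev_cat (eqP p2).
have T1 : z1 = take (size z1) z2.
  by have := take_size_cat (rev q1) (erefl (size z1)); rewrite -R1 R2 takel_cat // => ->.
move: (cat_take_drop (size z1) z2); rewrite -T1.
case: (lastP (drop (size z1) z2)) => [|t y]; first by rewrite cats0.
move=> E3; exfalso.
move: E2; rewrite -E3 catA -rcons_cat => /rcons_inj [E _].
by apply: (nf1 q2 t); rewrite E catA.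
Qed.

Lemma pal_step u x : size (pal_factors (rcons u x)) <= (size (pal_factors u)).+1.
Proof.
set A := pal_factors (rcons u x); set B := pal_factors u.
rewrite -(count_predC (mem B) A) -addn1.
apply: leq_add.
  rewrite -size_filter; apply: uniq_leq_size; first exact/filter_uniq/pal_factors_uniq.
  by move=> z; rewrite mem_filter => /andP [].
rewrite -size_filter.
have U : uniq (filter (predC (mem B)) A) by exact/filter_uniq/pal_factors_uniq.
case E: (filter (predC (mem B)) A) U => [|z1 [|z2 r]] //= /andP [nin _].
have : z1 \in filter (predC (mem B)) A by rewrite E mem_head.
have : z2 \in filter (predC (mem B)) A by rewrite E !inE eqxx orbT.
rewrite [_ \in filter _ A]mem_filter /= => /andP [n2 i2].
rewrite [_ \in filter _ A]mem_filter /= => /andP [n1 i1].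
by move: nin; rewrite (new_unique i1 n1 i2 n2) !inE eqxx.
Qed.

Lemma pal_cat u z : size (pal_factors (u ++ z)) <= size (pal_factors u) + size z.
Proof.
elim: z u => [|x z IH] u; first by rewrite cats0 addn0.
rewrite -cat_rcons; apply: (leq_trans (IH _)).
by rewrite /= addnS -addSn leq_add2r pal_step.
Qed.

Lemma pal_size u : size (pal_factors u) <= size u.
Proof. by have := pal_cat [::] u. Qed.

Lemma pal_rev u : size (pal_factors (rev u)) = size (pal_factors u).
Proof.
apply/perm_size/uniq_perm; try exact: pal_factors_uniq.
move=> z; apply/pal_factorsP/pal_factorsP => -[nz pz [p [s E]]]; split => //.
  exists (rev s), (rev p); by rewrite -(revK u) E !rev_cat (eqP pz) catA.
exists (rev s), (rev p); by rewrite E !rev_cat (eqP pz) catA.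
Qed.

Lemma nrich_catr u z : ~ rich u -> ~ rich (u ++ z).
Proof.
rewrite /rich => nr E; have := pal_cat u z; rewrite E size_cat leq_add2r => le.
by apply: nr; apply/eqP; rewrite eqn_leq pal_size le.
Qed.

Lemma nrich_catl u z : ~ rich u -> ~ rich (z ++ u).
Proof.
rewrite /rich => nr E.
have nr' : ~ rich (rev u) by rewrite /rich pal_rev size_rev.
have := @nrich_catr (rev u) (rev z) nr'; rewrite /rich -rev_cat pal_rev size_rev; exact.
Qed.

Lemma nrich_factor p u s : ~ rich u -> ~ rich (p ++ u ++ s).
Proof. by move=> nr; apply/nrich_catl/nrich_catr. Qed.

Lemma flatten_filter_nil (l : seq (seq T)) :
  flatten (filter (fun B => B != [::]) l) = flatten l.
Proof. by elim: l => //= B l IH; case: B => //= x B; rewrite IH. Qed.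

Lemma br_witness w P Y Q W R X S (bs : seq (seq T)) :
  w = P ++ Y ++ Q ++ W ++ R ++ X ++ S -> bs != [::] ->
  all (fun B => B != [::]) bs -> flatten bs = W ->
  ~ rich (X ++ flatten (rev bs) ++ Y) -> exists v, in_BR w v /\ ~ rich v.
Proof.
move=> Ew nb ab fb nr.
set cs := [:: P; Y ++ Q] ++ bs ++ [:: R ++ X; S].
exists (flatten (rev cs)); split.
  exists (filter (fun B => B != [::]) cs); split.
  - rewrite /cs; case: bs nb ab {fb nr cs} => // B bs' _ /andP [hB _].
    apply/negP => /eqP E.
    have : B \in filter (fun B => B != [::]) ([:: P; Y ++ Q] ++ (B :: bs') ++ [:: R ++ X; S]).
      by rewrite mem_filter hB /= !inE eqxx !orbT.
    by rewrite E.
  - exact: filter_all.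
  - by rewrite flatten_filter_nil /cs !flatten_cat Ew fb /= !cats0 -!catA.
  - by rewrite -filter_rev flatten_filter_nil.
rewrite /cs !rev_cat !flatten_cat /= !cats0 -!catA.
have -> : S ++ R ++ X ++ flatten (rev bs) ++ Y ++ Q ++ P =
   (S ++ R) ++ (X ++ flatten (rev bs) ++ Y) ++ (Q ++ P) by rewrite -!catA.
exact: nrich_factor.
Qed.

End Infra.

Section Map.
Variables (U T : eqType) (f : U -> T).
Hypothesis finj : injective f.

Lemma pal_factors_map u : pal_factors (map f u) = map (map f) (pal_factors u).
Proof.
rewrite /pal_factors /factors size_map.
have -> : [seq drop i (take j (map f u)) | i <- iota 0 (size u).+1, j <- iota 0 (size u).+1]
   = map (map f) [seq drop i (take j u) | i <- iota 0 (size u).+1, j <- iota 0 (size u).+1].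
  by rewrite map_allpairs; apply: eq_allpairs => i j; rewrite map_drop map_take.
rewrite undup_map_inj; last exact: inj_map.
rewrite filter_map; congr map; apply: eq_filter => x /=.
rewrite /palindrome -map_rev (inj_eq (inj_map finj)).
by case: x.
Qed.

Lemma rich_map u : rich (map f u) <-> rich u.
Proof. by rewrite /rich pal_factors_map !size_map. Qed.

Fixpoint comps (s : seq T) : seq (seq (seq T)) :=
  match s with
  | [::] => [:: [::]]
  | x :: s' => [seq [:: x] :: bs | bs <- comps s'] ++
               [seq match bs with [::] => [:: [:: x]] | B :: bs' => (x :: B) :: bs' end
               | bs <- comps s']
  end.

End Map.

Section Comps.
Variable T : eqType.

Lemma comps_complete (s : seq T) (bs : seq (seq T)) :
  all (fun B => B != [::]) bs -> flatten bs = s -> bs \in comps s.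
Proof.
elim: s bs => [|x s IH] [|B bs] //=.
- by case: B.
- case: B => [|y B] // /andP [_ ab] [-> E].
  rewrite mem_cat; apply/orP; case: B E => [|z B] E.
    by left; apply/map_f/IH.
  right; apply/mapP; exists ((z :: B) :: bs) => //.
  by apply: IH => //=; rewrite ab.
Qed.
End Comps.

Lemma comps_map (U T : eqType) (f : U -> T) (s : seq U) :
  comps (map f s) = map (map (map f)) (comps s).
Proof.
elim: s => //= x s IH; rewrite IH map_cat -!map_comp; congr (_ ++ _).
by apply: eq_map => -[|B bs].
Qed.

Section Runs.
Variable T : eqType.

Definition w8 (c d : T) n1 n2 n3 n4 n5 n6 n7 n8 :=
  nseq n1 c ++ nseq n2 d ++ nseq n3 c ++ nseq n4 d ++
  nseq n5 c ++ nseq n6 d ++ nseq n7 c ++ nseq n8 d.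

Lemma rle_props (w : seq T) :
  [/\ flatten [seq nseq p.2 p.1 | p <- rle w] = w,
      all (fun p => 0 < p.2) (rle w),
      sorted (fun p q => p.1 != q.1) (rle w) &
      all (fun p => p.1 \in w) (rle w)].
Proof.
elim: w => [|x w [IH1 IH2 IH3 IH4]] //=.
case E: (rle w) IH1 IH2 IH3 IH4 => [|[c n] r] /= IH1 IH2 IH3 IH4.
  by rewrite -IH1 /= inE eqxx.
case: (c =P x) => [<-|ne] /=.
  split => //.
  - by rewrite -IH1.
  - by case/andP: IH2.
  - by case: (r) IH3.
  - move: IH4 => /andP [_ h]; rewrite mem_head /=.
    by apply/sub_all: h => p /= hp; rewrite inE hp orbT.
split => //.
- by rewrite -IH1.
- rewrite IH3 andbT; by apply/eqP => E'; apply: ne.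
- rewrite mem_head /=; move: IH4 => /andP [h1 h]; rewrite inE h1 orbT /=.
  by apply/sub_all: h => p /= hp; rewrite inE hp orbT.
Qed.

Lemma ab3 (a b x y z : T) : a != b -> (x == a) || (x == b) -> (y == a) || (y == b) ->
  (z == a) || (z == b) -> x != y -> y != z -> z = x.
Proof.
move=> hab.
by do 3 (case/orP=> /eqP ->); rewrite ?eqxx //; rewrite eq_sym in hab; rewrite ?hab.
Qed.

Lemma runs8 (a b : T) (hab : a != b) w :
  all (fun x => (x == a) || (x == b)) w -> runs w = 8 ->
  exists c d n1 n2 n3 n4 n5 n6 n7 n8,
   ((c, d) = (a, b) \/ (c, d) = (b, a)) /\ w = w8 c d n1.+1 n2.+1 n3.+1 n4.+1 n5.+1 n6.+1 n7.+1 n8.+1.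
Proof.
move=> hw; rewrite /runs; have [F P S M] := rle_props w.
have ha : forall x, x \in w -> (x == a) || (x == b) by move=> x hx; exact: (allP hw).
case: (rle w) F P S M => [|[c1 k1] [|[c2 k2] [|[c3 k3] [|[c4 k4] [|[c5 k5] [|[c6 k6] [|[c7 k7] [|[c8 k8] [|]]]]]]]]] //= F P S M _.
move: P => /and5P [p1 p2 p3 p4 /and4P [p5 p6 p7 /andP [p8 _]]].
move: S => /and5P [s1 s2 s3 s4 /and3P [s5 s6 /andP [s7 _]]].
move: M => /and5P [m1 m2 m3 m4 /and4P [m5 m6 m7 /andP [m8 _]]].
case: k1 p1 F => // n1 _; case: k2 p2 => // n2 _; case: k3 p3 => // n3 _;
case: k4 p4 => // n4 _; case: k5 p5 => // n5 _; case: k6 p6 => // n6 _;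
case: k7 p7 => // n7 _; case: k8 p8 => // n8 _ F.
move/ha: m1 => m1; move/ha: m2 => m2; move/ha: m3 => m3; move/ha: m4 => m4;
move/ha: m5 => m5; move/ha: m6 => m6; move/ha: m7 => m7; move/ha: m8 => m8.
have e3 := ab3 hab m1 m2 m3 s1 s2.
have e4 := ab3 hab m2 m3 m4 s2 s3.
have e5 := ab3 hab m3 m4 m5 s3 s4.
have e6 := ab3 hab m4 m5 m6 s4 s5.
have e7 := ab3 hab m5 m6 m7 s5 s6.
have e8 := ab3 hab m6 m7 m8 s6 s7.
exists c1, c2, n1, n2, n3, n4, n5, n6, n7, n8; split.
  move: m1 m2 s1; case/orP => /eqP -> ; case/orP => /eqP ->; rewrite ?eqxx //; by [left | right].
by rewrite -F e8 e7 e6 e5 e4 e3 cats0.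
Qed.

End Runs.

Lemma nseq_ins (T : eqType) k l m (x : T) :
  nseq (k + (l + m)) x = nseq k x ++ nseq m x ++ nseq l x.
Proof. by rewrite nseqD (addnC l) nseqD. Qed.

Definition gb (T : eqType) (c d : T) (x : bool) := if x then c else d.

Lemma gb_inj (T : eqType) (c d : T) : c != d -> injective (gb c d).
Proof. by move=> hcd [] [] //= E; move: hcd; rewrite E eqxx. Qed.

Lemma nrich_bool (T : eqType) (c d : T) (hcd : c != d) (fb : seq bool) :
  size (pal_factors fb) != size fb -> ~ rich (map (gb c d) fb).
Proof. by move=> /eqP h /(rich_map (gb_inj hcd)). Qed.
Section Rules.
Variable T : eqType.

Lemma rule0 (c d : T) (hcd : c != d) m1 m2 m3 m5 m6 m8 :
  exists v, in_BR (w8 c d m1.+1 m2.+1 m3.+1 1 m5.+1 m6.+1 1 m8.+2) v /\ ~ rich v.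
Proof.
have E1 : nseq m1.+1 c = nseq 0 c ++ nseq m1 c ++ nseq 1 c := nseq_ins 0 1 m1 c.
have E2 : nseq m2.+1 d = nseq 1 d ++ nseq m2 d ++ nseq 0 d := nseq_ins 1 0 m2 d.
have E3 : nseq m3.+1 c = nseq 0 c ++ nseq m3 c ++ nseq 1 c := nseq_ins 0 1 m3 c.
have E5 : nseq m5.+1 c = nseq 1 c ++ nseq m5 c ++ nseq 0 c := nseq_ins 1 0 m5 c.
have E6 : nseq m6.+1 d = nseq 0 d ++ nseq m6 d ++ nseq 1 d := nseq_ins 0 1 m6 d.
have E8 : nseq m8.+2 d = nseq 2 d ++ nseq m8 d ++ nseq 0 d := nseq_ins 2 0 m8 d.
have EQ : w8 c d m1.+1 m2.+1 m3.+1 1 m5.+1 m6.+1 1 m8.+2 = (nseq m1 c) ++ ([:: c] ++ [:: d]) ++ (nseq m2 d ++ nseq m3 c) ++ ([:: c] ++ [:: d] ++ [:: c]) ++ (nseq m5 c ++ nseq m6 d) ++ ([:: d] ++ [:: c] ++ [:: d] ++ [:: d]) ++ (nseq m8 d).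
  rewrite /w8 E1 E2 E3 E5 E6 E8; by rewrite -!catA /= ?cats0.
exact: (br_witness (bs := [:: [:: c; d]; [:: c]]) EQ erefl erefl erefl (nrich_bool hcd (fb := [:: false; true; false; false; true; true; false; true; false]) erefl)).
Qed.

Lemma rule1 (c d : T) (hcd : c != d) m1 m2 m3 m6 m7 m8 :
  exists v, in_BR (w8 c d m1.+1 m2.+1 m3.+1 1 1 m6.+1 m7.+2 m8.+1) v /\ ~ rich v.
Proof.
have E1 : nseq m1.+1 c = nseq 0 c ++ nseq m1 c ++ nseq 1 c := nseq_ins 0 1 m1 c.
have E2 : nseq m2.+1 d = nseq 0 d ++ nseq m2 d ++ nseq 1 d := nseq_ins 0 1 m2 d.
have E3 : nseq m3.+1 c = nseq 0 c ++ nseq m3 c ++ nseq 1 c := nseq_ins 0 1 m3 c.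
have E6 : nseq m6.+1 d = nseq 1 d ++ nseq m6 d ++ nseq 0 d := nseq_ins 1 0 m6 d.
have E7 : nseq m7.+2 c = nseq 0 c ++ nseq m7 c ++ nseq 2 c := nseq_ins 0 2 m7 c.
have E8 : nseq m8.+1 d = nseq 1 d ++ nseq m8 d ++ nseq 0 d := nseq_ins 1 0 m8 d.
have EQ : w8 c d m1.+1 m2.+1 m3.+1 1 1 m6.+1 m7.+2 m8.+1 = (nseq m1 c) ++ ([:: c]) ++ (nseq m2 d ++ [:: d] ++ nseq m3 c) ++ ([:: c] ++ [:: d] ++ [:: c] ++ [:: d]) ++ (nseq m6 d ++ nseq m7 c) ++ ([:: c] ++ [:: c] ++ [:: d]) ++ (nseq m8 d).
  rewrite /w8 E1 E2 E3 E6 E7 E8; by rewrite -!catA /= ?cats0.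
exact: (br_witness (bs := [:: [:: c]; [:: d; c; d]]) EQ erefl erefl erefl (nrich_bool hcd (fb := [:: true; true; false; false; true; false; true; true]) erefl)).
Qed.

Lemma rule2 (c d : T) (hcd : c != d) m1 m2 m3 m5 m6 m8 :
  exists v, in_BR (w8 c d m1.+1 m2.+1 m3.+1 1 m5.+1 m6.+2 1 m8.+1) v /\ ~ rich v.
Proof.
have E1 : nseq m1.+1 c = nseq 0 c ++ nseq m1 c ++ nseq 1 c := nseq_ins 0 1 m1 c.
have E2 : nseq m2.+1 d = nseq 0 d ++ nseq m2 d ++ nseq 1 d := nseq_ins 0 1 m2 d.
have E3 : nseq m3.+1 c = nseq 0 c ++ nseq m3 c ++ nseq 1 c := nseq_ins 0 1 m3 c.
have E5 : nseq m5.+1 c = nseq 1 c ++ nseq m5 c ++ nseq 0 c := nseq_ins 1 0 m5 c.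
have E6 : nseq m6.+2 d = nseq 0 d ++ nseq m6 d ++ nseq 2 d := nseq_ins 0 2 m6 d.
have E8 : nseq m8.+1 d = nseq 1 d ++ nseq m8 d ++ nseq 0 d := nseq_ins 1 0 m8 d.
have EQ : w8 c d m1.+1 m2.+1 m3.+1 1 m5.+1 m6.+2 1 m8.+1 = (nseq m1 c ++ [:: c] ++ nseq m2 d) ++ ([:: d]) ++ (nseq m3 c) ++ ([:: c] ++ [:: d] ++ [:: c]) ++ (nseq m5 c ++ nseq m6 d) ++ ([:: d] ++ [:: d] ++ [:: c] ++ [:: d]) ++ (nseq m8 d).
  rewrite /w8 E1 E2 E3 E5 E6 E8; by rewrite -!catA /= ?cats0.
exact: (br_witness (bs := [:: [:: c; d]; [:: c]]) EQ erefl erefl erefl (nrich_bool hcd (fb := [:: false; false; true; false; true; true; false; false]) erefl)).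
Qed.

Lemma rule3 (c d : T) (hcd : c != d) m1 m2 m3 m4 m5 m8 :
  exists v, in_BR (w8 c d m1.+1 m2.+1 m3.+1 m4.+1 m5.+2 1 1 m8.+1) v /\ ~ rich v.
Proof.
have E1 : nseq m1.+1 c = nseq 0 c ++ nseq m1 c ++ nseq 1 c := nseq_ins 0 1 m1 c.
have E2 : nseq m2.+1 d = nseq 0 d ++ nseq m2 d ++ nseq 1 d := nseq_ins 0 1 m2 d.
have E3 : nseq m3.+1 c = nseq 1 c ++ nseq m3 c ++ nseq 0 c := nseq_ins 1 0 m3 c.
have E4 : nseq m4.+1 d = nseq 0 d ++ nseq m4 d ++ nseq 1 d := nseq_ins 0 1 m4 d.
have E5 : nseq m5.+2 c = nseq 0 c ++ nseq m5 c ++ nseq 2 c := nseq_ins 0 2 m5 c.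
have E8 : nseq m8.+1 d = nseq 1 d ++ nseq m8 d ++ nseq 0 d := nseq_ins 1 0 m8 d.
have EQ : w8 c d m1.+1 m2.+1 m3.+1 m4.+1 m5.+2 1 1 m8.+1 = (nseq m1 c) ++ ([:: c]) ++ (nseq m2 d) ++ ([:: d] ++ [:: c]) ++ (nseq m3 c ++ nseq m4 d ++ [:: d] ++ nseq m5 c) ++ ([:: c] ++ [:: c] ++ [:: d] ++ [:: c] ++ [:: d]) ++ (nseq m8 d).
  rewrite /w8 E1 E2 E3 E4 E5 E8; by rewrite -!catA /= ?cats0.
exact: (br_witness (bs := [:: [:: d; c]]) EQ erefl erefl erefl (nrich_bool hcd (fb := [:: true; true; false; true; false; false; true; true]) erefl)).
Qed.

Lemma rule4 (c d : T) (hcd : c != d) m1 m2 m3 m5 m6 m7 m8 :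
  exists v, in_BR (w8 c d m1.+1 m2.+1 m3.+1 1 m5.+2 m6.+1 m7.+2 m8.+1) v /\ ~ rich v.
Proof.
have E1 : nseq m1.+1 c = nseq 0 c ++ nseq m1 c ++ nseq 1 c := nseq_ins 0 1 m1 c.
have E2 : nseq m2.+1 d = nseq 0 d ++ nseq m2 d ++ nseq 1 d := nseq_ins 0 1 m2 d.
have E3 : nseq m3.+1 c = nseq 0 c ++ nseq m3 c ++ nseq 1 c := nseq_ins 0 1 m3 c.
have E5 : nseq m5.+2 c = nseq 2 c ++ nseq m5 c ++ nseq 0 c := nseq_ins 2 0 m5 c.
have E6 : nseq m6.+1 d = nseq 0 d ++ nseq m6 d ++ nseq 1 d := nseq_ins 0 1 m6 d.
have E7 : nseq m7.+2 c = nseq 0 c ++ nseq m7 c ++ nseq 2 c := nseq_ins 0 2 m7 c.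
have E8 : nseq m8.+1 d = nseq 1 d ++ nseq m8 d ++ nseq 0 d := nseq_ins 1 0 m8 d.
have EQ : w8 c d m1.+1 m2.+1 m3.+1 1 m5.+2 m6.+1 m7.+2 m8.+1 = (nseq m1 c ++ [:: c] ++ nseq m2 d ++ [:: d] ++ nseq m3 c) ++ ([:: c] ++ [:: d] ++ [:: c] ++ [:: c]) ++ (nseq m5 c ++ nseq m6 d) ++ ([:: d]) ++ (nseq m7 c) ++ ([:: c] ++ [:: c] ++ [:: d]) ++ (nseq m8 d).
  rewrite /w8 E1 E2 E3 E5 E6 E7 E8; by rewrite -!catA /= ?cats0.
exact: (br_witness (bs := [:: [:: d]]) EQ erefl erefl erefl (nrich_bool hcd (fb := [:: true; true; false; false; true; false; true; true]) erefl)).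
Qed.

Lemma rule5 (c d : T) (hcd : c != d) m1 m2 m4 m5 m7 m8 :
  exists v, in_BR (w8 c d m1.+1 m2.+1 1 m4.+2 m5.+1 1 m7.+1 m8.+1) v /\ ~ rich v.
Proof.
have E1 : nseq m1.+1 c = nseq 0 c ++ nseq m1 c ++ nseq 1 c := nseq_ins 0 1 m1 c.
have E2 : nseq m2.+1 d = nseq 0 d ++ nseq m2 d ++ nseq 1 d := nseq_ins 0 1 m2 d.
have E4 : nseq m4.+2 d = nseq 2 d ++ nseq m4 d ++ nseq 0 d := nseq_ins 2 0 m4 d.
have E5 : nseq m5.+1 c = nseq 0 c ++ nseq m5 c ++ nseq 1 c := nseq_ins 0 1 m5 c.
have E7 : nseq m7.+1 c = nseq 1 c ++ nseq m7 c ++ nseq 0 c := nseq_ins 1 0 m7 c.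
have E8 : nseq m8.+1 d = nseq 0 d ++ nseq m8 d ++ nseq 1 d := nseq_ins 0 1 m8 d.
have EQ : w8 c d m1.+1 m2.+1 1 m4.+2 m5.+1 1 m7.+1 m8.+1 = (nseq m1 c ++ [:: c] ++ nseq m2 d) ++ ([:: d] ++ [:: c] ++ [:: d] ++ [:: d]) ++ (nseq m4 d ++ nseq m5 c) ++ ([:: c] ++ [:: d] ++ [:: c]) ++ (nseq m7 c ++ nseq m8 d) ++ ([:: d]) ++ [::].
  rewrite /w8 E1 E2 E4 E5 E7 E8; by rewrite -!catA /= ?cats0.
exact: (br_witness (bs := [:: [:: c]; [:: d; c]]) EQ erefl erefl erefl (nrich_bool hcd (fb := [:: false; false; true; true; false; true; false; false]) erefl)).
Qed.

Lemma rule6 (c d : T) (hcd : c != d) m1 m2 m3 m4 m5 m6 m8 :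
  exists v, in_BR (w8 c d m1.+1 m2.+1 m3.+1 m4.+2 m5.+1 m6.+2 1 m8.+1) v /\ ~ rich v.
Proof.
have E1 : nseq m1.+1 c = nseq 0 c ++ nseq m1 c ++ nseq 1 c := nseq_ins 0 1 m1 c.
have E2 : nseq m2.+1 d = nseq 0 d ++ nseq m2 d ++ nseq 1 d := nseq_ins 0 1 m2 d.
have E3 : nseq m3.+1 c = nseq 0 c ++ nseq m3 c ++ nseq 1 c := nseq_ins 0 1 m3 c.
have E4 : nseq m4.+2 d = nseq 2 d ++ nseq m4 d ++ nseq 0 d := nseq_ins 2 0 m4 d.
have E5 : nseq m5.+1 c = nseq 0 c ++ nseq m5 c ++ nseq 1 c := nseq_ins 0 1 m5 c.
have E6 : nseq m6.+2 d = nseq 0 d ++ nseq m6 d ++ nseq 2 d := nseq_ins 0 2 m6 d.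
have E8 : nseq m8.+1 d = nseq 1 d ++ nseq m8 d ++ nseq 0 d := nseq_ins 1 0 m8 d.
have EQ : w8 c d m1.+1 m2.+1 m3.+1 m4.+2 m5.+1 m6.+2 1 m8.+1 = (nseq m1 c ++ [:: c] ++ nseq m2 d ++ [:: d] ++ nseq m3 c) ++ ([:: c] ++ [:: d] ++ [:: d]) ++ (nseq m4 d ++ nseq m5 c) ++ ([:: c]) ++ (nseq m6 d) ++ ([:: d] ++ [:: d] ++ [:: c] ++ [:: d]) ++ (nseq m8 d).
  rewrite /w8 E1 E2 E3 E4 E5 E6 E8; by rewrite -!catA /= ?cats0.
exact: (br_witness (bs := [:: [:: c]]) EQ erefl erefl erefl (nrich_bool hcd (fb := [:: false; false; true; false; true; true; false; false]) erefl)).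
Qed.

Lemma rule7 (c d : T) (hcd : c != d) m1 m2 m3 m4 m5 m6 m7 m8 :
  exists v, in_BR (w8 c d m1.+1 m2.+1 m3.+1 m4.+2 m5.+1 m6.+2 m7.+2 m8.+1) v /\ ~ rich v.
Proof.
have E1 : nseq m1.+1 c = nseq 0 c ++ nseq m1 c ++ nseq 1 c := nseq_ins 0 1 m1 c.
have E2 : nseq m2.+1 d = nseq 0 d ++ nseq m2 d ++ nseq 1 d := nseq_ins 0 1 m2 d.
have E3 : nseq m3.+1 c = nseq 0 c ++ nseq m3 c ++ nseq 1 c := nseq_ins 0 1 m3 c.
have E4 : nseq m4.+2 d = nseq 2 d ++ nseq m4 d ++ nseq 0 d := nseq_ins 2 0 m4 d.
have E5 : nseq m5.+1 c = nseq 0 c ++ nseq m5 c ++ nseq 1 c := nseq_ins 0 1 m5 c.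
have E6 : nseq m6.+2 d = nseq 0 d ++ nseq m6 d ++ nseq 2 d := nseq_ins 0 2 m6 d.
have E7 : nseq m7.+2 c = nseq 2 c ++ nseq m7 c ++ nseq 0 c := nseq_ins 2 0 m7 c.
have E8 : nseq m8.+1 d = nseq 0 d ++ nseq m8 d ++ nseq 1 d := nseq_ins 0 1 m8 d.
have EQ : w8 c d m1.+1 m2.+1 m3.+1 m4.+2 m5.+1 m6.+2 m7.+2 m8.+1 = (nseq m1 c ++ [:: c] ++ nseq m2 d) ++ ([:: d]) ++ (nseq m3 c) ++ ([:: c] ++ [:: d] ++ [:: d]) ++ (nseq m4 d ++ nseq m5 c ++ [:: c] ++ nseq m6 d) ++ ([:: d] ++ [:: d] ++ [:: c] ++ [:: c]) ++ (nseq m7 c ++ nseq m8 d ++ [:: d]).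
  rewrite /w8 E1 E2 E3 E4 E5 E6 E7 E8; by rewrite -!catA /= ?cats0.
exact: (br_witness (bs := [:: [:: c; d]; [:: d]]) EQ erefl erefl erefl (nrich_bool hcd (fb := [:: false; false; true; true; false; true; false; false]) erefl)).
Qed.

Lemma rule8 (c d : T) (hcd : c != d) m1 m3 m4 m5 m8 :
  exists v, in_BR (w8 c d m1.+1 1 m3.+2 m4.+1 m5.+1 1 1 m8.+1) v /\ ~ rich v.
Proof.
have E1 : nseq m1.+1 c = nseq 0 c ++ nseq m1 c ++ nseq 1 c := nseq_ins 0 1 m1 c.
have E3 : nseq m3.+2 c = nseq 1 c ++ nseq m3 c ++ nseq 1 c := nseq_ins 1 1 m3 c.
have E4 : nseq m4.+1 d = nseq 1 d ++ nseq m4 d ++ nseq 0 d := nseq_ins 1 0 m4 d.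
have E5 : nseq m5.+1 c = nseq 0 c ++ nseq m5 c ++ nseq 1 c := nseq_ins 0 1 m5 c.
have E8 : nseq m8.+1 d = nseq 1 d ++ nseq m8 d ++ nseq 0 d := nseq_ins 1 0 m8 d.
have EQ : w8 c d m1.+1 1 m3.+2 m4.+1 m5.+1 1 1 m8.+1 = (nseq m1 c) ++ ([:: c] ++ [:: d] ++ [:: c]) ++ (nseq m3 c) ++ ([:: c] ++ [:: d]) ++ (nseq m4 d ++ nseq m5 c) ++ ([:: c] ++ [:: d] ++ [:: c] ++ [:: d]) ++ (nseq m8 d).
  rewrite /w8 E1 E3 E4 E5 E8; by rewrite -!catA /= ?cats0.
exact: (br_witness (bs := [:: [:: c]; [:: d]]) EQ erefl erefl erefl (nrich_bool hcd (fb := [:: true; false; true; false; false; true; true; false; true]) erefl)).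
Qed.

Lemma rule9 (c d : T) (hcd : c != d) m1 m2 m3 m4 m7 m8 :
  exists v, in_BR (w8 c d m1.+1 m2.+1 m3.+1 m4.+2 1 1 m7.+2 m8.+1) v /\ ~ rich v.
Proof.
have E1 : nseq m1.+1 c = nseq 0 c ++ nseq m1 c ++ nseq 1 c := nseq_ins 0 1 m1 c.
have E2 : nseq m2.+1 d = nseq 0 d ++ nseq m2 d ++ nseq 1 d := nseq_ins 0 1 m2 d.
have E3 : nseq m3.+1 c = nseq 0 c ++ nseq m3 c ++ nseq 1 c := nseq_ins 0 1 m3 c.
have E4 : nseq m4.+2 d = nseq 0 d ++ nseq m4 d ++ nseq 2 d := nseq_ins 0 2 m4 d.
have E7 : nseq m7.+2 c = nseq 2 c ++ nseq m7 c ++ nseq 0 c := nseq_ins 2 0 m7 c.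
have E8 : nseq m8.+1 d = nseq 0 d ++ nseq m8 d ++ nseq 1 d := nseq_ins 0 1 m8 d.
have EQ : w8 c d m1.+1 m2.+1 m3.+1 m4.+2 1 1 m7.+2 m8.+1 = (nseq m1 c ++ [:: c] ++ nseq m2 d) ++ ([:: d]) ++ (nseq m3 c ++ [:: c] ++ nseq m4 d) ++ ([:: d] ++ [:: d] ++ [:: c] ++ [:: d] ++ [:: c] ++ [:: c]) ++ (nseq m7 c ++ nseq m8 d) ++ ([:: d]) ++ [::].
  rewrite /w8 E1 E2 E3 E4 E7 E8; by rewrite -!catA /= ?cats0.
exact: (br_witness (bs := [:: [:: d]; [:: d; c; d; c; c]]) EQ erefl erefl erefl (nrich_bool hcd (fb := [:: false; false; true; false; true; true; false; false]) erefl)).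
Qed.

Lemma rule10 (c d : T) (hcd : c != d) m1 m2 m3 m4 m5 m6 m7 m8 :
  exists v, in_BR (w8 c d m1.+1 m2.+1 m3.+1 m4.+2 m5.+2 m6.+1 m7.+2 m8.+1) v /\ ~ rich v.
Proof.
have E1 : nseq m1.+1 c = nseq 0 c ++ nseq m1 c ++ nseq 1 c := nseq_ins 0 1 m1 c.
have E2 : nseq m2.+1 d = nseq 0 d ++ nseq m2 d ++ nseq 1 d := nseq_ins 0 1 m2 d.
have E3 : nseq m3.+1 c = nseq 0 c ++ nseq m3 c ++ nseq 1 c := nseq_ins 0 1 m3 c.
have E4 : nseq m4.+2 d = nseq 0 d ++ nseq m4 d ++ nseq 2 d := nseq_ins 0 2 m4 d.
have E5 : nseq m5.+2 c = nseq 2 c ++ nseq m5 c ++ nseq 0 c := nseq_ins 2 0 m5 c.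
have E6 : nseq m6.+1 d = nseq 0 d ++ nseq m6 d ++ nseq 1 d := nseq_ins 0 1 m6 d.
have E7 : nseq m7.+2 c = nseq 0 c ++ nseq m7 c ++ nseq 2 c := nseq_ins 0 2 m7 c.
have E8 : nseq m8.+1 d = nseq 1 d ++ nseq m8 d ++ nseq 0 d := nseq_ins 1 0 m8 d.
have EQ : w8 c d m1.+1 m2.+1 m3.+1 m4.+2 m5.+2 m6.+1 m7.+2 m8.+1 = (nseq m1 c) ++ ([:: c]) ++ (nseq m2 d ++ [:: d] ++ nseq m3 c ++ [:: c] ++ nseq m4 d) ++ ([:: d] ++ [:: d] ++ [:: c] ++ [:: c]) ++ (nseq m5 c ++ nseq m6 d ++ [:: d] ++ nseq m7 c) ++ ([:: c] ++ [:: c] ++ [:: d]) ++ (nseq m8 d).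
  rewrite /w8 E1 E2 E3 E4 E5 E6 E7 E8; by rewrite -!catA /= ?cats0.
exact: (br_witness (bs := [:: [:: d; d; c]; [:: c]]) EQ erefl erefl erefl (nrich_bool hcd (fb := [:: true; true; false; true; false; false; true; true]) erefl)).
Qed.

Lemma rule11 (c d : T) (hcd : c != d) m1 m2 m3 m4 m7 m8 :
  exists v, in_BR (w8 c d m1.+1 m2.+2 m3.+1 m4.+1 1 1 m7.+1 m8.+1) v /\ ~ rich v.
Proof.
have E1 : nseq m1.+1 c = nseq 0 c ++ nseq m1 c ++ nseq 1 c := nseq_ins 0 1 m1 c.
have E2 : nseq m2.+2 d = nseq 2 d ++ nseq m2 d ++ nseq 0 d := nseq_ins 2 0 m2 d.
have E3 : nseq m3.+1 c = nseq 0 c ++ nseq m3 c ++ nseq 1 c := nseq_ins 0 1 m3 c.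
have E4 : nseq m4.+1 d = nseq 0 d ++ nseq m4 d ++ nseq 1 d := nseq_ins 0 1 m4 d.
have E7 : nseq m7.+1 c = nseq 1 c ++ nseq m7 c ++ nseq 0 c := nseq_ins 1 0 m7 c.
have E8 : nseq m8.+1 d = nseq 0 d ++ nseq m8 d ++ nseq 1 d := nseq_ins 0 1 m8 d.
have EQ : w8 c d m1.+1 m2.+2 m3.+1 m4.+1 1 1 m7.+1 m8.+1 = (nseq m1 c) ++ ([:: c] ++ [:: d] ++ [:: d]) ++ (nseq m2 d ++ nseq m3 c ++ [:: c] ++ nseq m4 d) ++ ([:: d] ++ [:: c] ++ [:: d] ++ [:: c]) ++ (nseq m7 c ++ nseq m8 d) ++ ([:: d]) ++ [::].
  rewrite /w8 E1 E2 E3 E4 E7 E8; by rewrite -!catA /= ?cats0.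
exact: (br_witness (bs := [:: [:: d; c; d; c]]) EQ erefl erefl erefl (nrich_bool hcd (fb := [:: false; false; true; false; true; true; false; false]) erefl)).
Qed.

Lemma rule12 (c d : T) (hcd : c != d) m1 m2 m6 m7 m8 :
  exists v, in_BR (w8 c d m1.+2 m2.+1 1 1 1 m6.+1 m7.+1 m8.+1) v /\ ~ rich v.
Proof.
have E1 : nseq m1.+2 c = nseq 0 c ++ nseq m1 c ++ nseq 2 c := nseq_ins 0 2 m1 c.
have E2 : nseq m2.+1 d = nseq 0 d ++ nseq m2 d ++ nseq 1 d := nseq_ins 0 1 m2 d.
have E6 : nseq m6.+1 d = nseq 1 d ++ nseq m6 d ++ nseq 0 d := nseq_ins 1 0 m6 d.
have E7 : nseq m7.+1 c = nseq 0 c ++ nseq m7 c ++ nseq 1 c := nseq_ins 0 1 m7 c.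
have E8 : nseq m8.+1 d = nseq 0 d ++ nseq m8 d ++ nseq 1 d := nseq_ins 0 1 m8 d.
have EQ : w8 c d m1.+2 m2.+1 1 1 1 m6.+1 m7.+1 m8.+1 = (nseq m1 c) ++ ([:: c] ++ [:: c]) ++ (nseq m2 d) ++ ([:: d] ++ [:: c] ++ [:: d] ++ [:: c] ++ [:: d]) ++ (nseq m6 d ++ nseq m7 c) ++ ([:: c]) ++ (nseq m8 d ++ [:: d]).
  rewrite /w8 E1 E2 E6 E7 E8; by rewrite -!catA /= ?cats0.
exact: (br_witness (bs := [:: [:: d]; [:: c; d; c; d]]) EQ erefl erefl erefl (nrich_bool hcd (fb := [:: true; true; false; true; false; false; true; true]) erefl)).
Qed.

End Rules.

Lemma bad_all (T : eqType) (c d : T) (hcd : c != d) n1 n2 n3 n4 n5 n6 n7 n8 :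
  ~~ [&& n1 == 0, n2 == 0, n3 == 0, n4 == 0, n5 == 0, n6 == 0, n7 == 0 & n8 == 0] ->
  exists v, in_BR (w8 c d n1.+1 n2.+1 n3.+1 n4.+1 n5.+1 n6.+1 n7.+1 n8.+1) v /\ ~ rich v.
Proof.
case: n1 => [|n1]; case: n2 => [|n2]; case: n3 => [|n3]; case: n4 => [|n4];
case: n5 => [|n5]; case: n6 => [|n6]; case: n7 => [|n7]; case: n8 => [|n8];
move=> /= H; try discriminate H; first [ apply: (rule0 hcd) | apply: (rule1 hcd) | apply: (rule2 hcd) | apply: (rule3 hcd) | apply: (rule4 hcd) | apply: (rule5 hcd) | apply: (rule6 hcd) | apply: (rule7 hcd) | apply: (rule8 hcd) | apply: (rule9 hcd) | apply: (rule10 hcd) | apply: (rule11 hcd) | apply: (rule12 hcd) ].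
Qed.

Lemma good_alt (T : eqType) (c d : T) (hcd : c != d) v :
  in_BR [:: c; d; c; d; c; d; c; d] v -> rich v.
Proof.
move=> [bs [nb ab fb ->]].
have := comps_complete ab fb.
have -> : [:: c; d; c; d; c; d; c; d] = map (gb c d) [:: true; false; true; false; true; false; true; false] by [].
rewrite comps_map => /mapP [bsb hb ->].
rewrite -map_rev -map_flatten; apply/(rich_map (gb_inj hcd)).
have : all (fun bs => size (pal_factors (flatten (rev bs))) == size (flatten (rev bs)))
         (comps [:: true; false; true; false; true; false; true; false]) by vm_compute.
by move=> /allP /(_ _ hb) /eqP.
Qed.

Theorem mainTheorem8 (T : eqType) (a b : T) (hab : a != b) (w : seq T)
  (hw : all (fun x => (x == a) || (x == b)) w) (hl : runs w = 8) :
  (forall v, in_BR w v -> rich v) <->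
  (w = [:: a; b; a; b; a; b; a; b] \/ w = [:: b; a; b; a; b; a; b; a]).
Proof.
split; last first.
  case=> -> v; first exact: good_alt.
  by apply: good_alt; rewrite eq_sym.
move=> H.
have [c [d [n1 [n2 [n3 [n4 [n5 [n6 [n7 [n8 [hcd Ew]]]]]]]]]]] := runs8 hab hw hl.
have cd : c != d by case: hcd => -[-> ->] //; rewrite eq_sym.
case: (boolP [&& n1 == 0, n2 == 0, n3 == 0, n4 == 0, n5 == 0, n6 == 0, n7 == 0 & n8 == 0]).
  case/and5P => /eqP e1 /eqP e2 /eqP e3 /eqP e4 /and4P [/eqP e5 /eqP e6 /eqP e7 /eqP e8].
  subst; by case: hcd => -[-> ->]; [left | right].
move=> nz; have [v [hv nr]] := bad_all cd nz.
by exfalso; apply: nr; apply: H; rewrite Ew.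
Qed.
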